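(* Let $f$ be a $C^1$ expanding map of $\mathbf{S}^1$ and $m\ge0$. Denote by $\operatorname{Leb}_N$ the uniform probability measure on $E_N$. Then, as $N\to+\infty$, the measures $((f_N)_* )^m(\operatorname{Leb}_N)$ converge in the weak-* topology to the probability measure on $\mathbf{S}^1$ with density $\mathcal L_f^m1$ with respect to Lebesgue measure, where $1$ is the constant function equal to $1$.
   Context: $\mathbf{S}^1=\mathbf{R}/\mathbf{Z}$; a $C^1$ expanding map is a $C^1$ map $f:\mathbf{S}^1\to\mathbf{S}^1$ with $f'(x)>1$ for every $x$ (for the map $\mathcal D^1$ convention, $f'\ge1$). $E_N=\{i/N:1\le i\le N\}$, $P_N$ sends $x$ to a closest point of $E_N$, $f_N=P_N\circ f|_{E_N}$, and $(f_N)_*$ denotes push-forward of measures by $f_N$. $\mathcal L_f\phi(y)=\sum_{x\in f^{-1}(y)}\phi(x)/f'(x)$ is the transfer operator. *)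

(* Defs.v *)
From HB Require Import structures.
From mathcomp Require Import all_boot all_order all_algebra.
From mathcomp Require Import all_classical all_reals all_analysis.
Set Implicit Arguments. Unset Strict Implicit. Unset Printing Implicit Defensive.
Import Order.TTheory GRing.Theory Num.Theory.
Import numFieldNormedType.Exports.
Local Open Scope classical_set_scope.
Local Open Scope ring_scope.

(* The circle S^1 = R/Z is modelled by R; functions on S^1 are 1-periodic
   functions R -> R; a map f : S^1 -> S^1 is given by a lift F : R -> R with
   F (x + 1) = F x + d for an integer d (the degree). *)

Definition is_lift (R : realType) (F : R -> R) : Prop :=
  exists d : int, forall x : R, F (x + 1) = F x + d%:~R.

Definition C1_expanding (R : realType) (F : R -> R) : Prop :=
  [/\ is_lift F,
      (forall x : R, derivable F x 1),
      continuous (derive1 F) &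
      (forall x : R, 1 < derive1 F x)].

Definition periodic1 (R : realType) (phi : R -> R) : Prop :=
  forall x : R, phi (x + 1) = phi x.

Definition cdist (R : realType) (x y : R) : R :=
  Num.min ((x - y) - (Num.floor (x - y))%:~R) ((Num.ceil (x - y))%:~R - (x - y)).

Definition preim (R : realType) (F : R -> R) (y : R) : set R :=
  [set x | 0 <= x < 1 /\ exists k : int, F x = y + k%:~R].

Definition transfer (R : realType) (F : R -> R) (phi : R -> R) (y : R) : R :=
  \sum_(x \in preim F y) phi x / derive1 F x.

(* P is a closest-point projection onto E_N: P N x is an index j < N such that
   j/N (the point j/N of E_N, with 0/N identified with N/N) is a closest point
   of E_N to x on the circle. *)
Definition closest_proj (R : realType) (P : nat -> R -> nat) : Prop :=
  forall (N : nat) (x : R), (0 < N)%N ->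
    (P N x < N)%N /\
    forall j : nat, (j < N)%N ->
      cdist x ((P N x)%:R / N%:R) <= cdist x (j%:R / N%:R).

Definition discr (R : realType) (F : R -> R) (P : nat -> R -> nat) (N : nat)
  (i : nat) : nat := P N (F (i%:R / N%:R)).

(* Main.v *)
Require Import Defs.
From HB Require Import structures.
From mathcomp Require Import all_boot all_order all_algebra.
From mathcomp Require Import all_classical all_reals all_analysis.
From mathcomp Require Import ring lra zify.
From Stdlib Require Import Lia.
Set Implicit Arguments. Unset Strict Implicit. Unset Printing Implicit Defensive.
Import Order.TTheory GRing.Theory Num.Theory.
Import numFieldNormedType.Exports.
Local Open Scope classical_set_scope.
Local Open Scope ring_scope.

Section Basics.
Variable R : realType.
Implicit Types x y z : R.

Lemma cdist_le x y (k : int) : cdist x y <= `|x - y - k%:~R|.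
Proof.
rewrite /cdist; set z := x - y.
have [kz|zk] := leP k%:~R z.
  rewrite ger0_norm ?subr_ge0 // ge_min; apply/orP; left.
  have : k <= Num.floor z by rewrite floor_ge_int.
  rewrite -(ler_int R) => H; lra.
rewrite ltr0_norm ?subr_lt0 // ge_min; apply/orP; right.
have : Num.ceil z <= k by rewrite ceil_le_int ltW.
rewrite -(ler_int R) => H; lra.
Qed.

Lemma cdist_ex x y : exists k : int, `|x - y - k%:~R| <= cdist x y.
Proof.
rewrite /cdist; set z := x - y.
case: (leP ((z - (Num.floor z)%:~R)) ((Num.ceil z)%:~R - z)) => H.
  exists (Num.floor z); rewrite ger0_norm // subr_ge0 floor_le //.
exists (Num.ceil z); rewrite ler0_norm ?opprB // ?subr_le0 ?ceil_ge //.
Qed.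



Lemma per_nat (phi : R -> R) : periodic1 phi -> forall x (n : nat), phi (x + n%:R) = phi x.
Proof.
move=> hp x; elim=> [|n IH]; first by rewrite addr0.
by rewrite -natr1 addrA hp.
Qed.

Lemma per_int (phi : R -> R) : periodic1 phi -> forall x (k : int), phi (x + k%:~R) = phi x.
Proof.
move=> hp x [n|n] /=; first exact: per_nat.
rewrite NegzE mulrNz -[in RHS](subrK (n.+1%:R) x).
by rewrite per_nat.
Qed.

Lemma unif_cont (psi : R -> R) : continuous psi -> periodic1 psi ->
  forall e, 0 < e -> exists2 dl, 0 < dl &
    forall x y, `|x - y| < dl -> `|psi x - psi y| < e.
Proof.
move=> cpsi ppsi e e0.
pose P := fun (dl : R) (x : R) => forall y, `|x - y| < dl -> `|psi x - psi y| < e.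
have HP : \forall dl \near (0:R)^'+, `[0, 1] `<=` P dl.
  apply: (compact_near_coveringP `[(0:R), 1]).1 => //; first exact: segment_compact.
  move=> x _.
  have e20 : 0 < e / 2 by rewrite divr_gt0.
  have := cpsi x; move/cvgr_dist_lt => /(_ _ e20).
  rewrite /= nearE => -[r /= r0 Hr].
  exists (ball x (r / 2), [set d : R | d < r / 2]) => /=.
    split; first by apply: nbhsx_ballx; rewrite divr_gt0.
    exists (r / 2); first by rewrite /= divr_gt0.
    move=> d /=; rewrite sub0r normrN => hd _; exact: le_lt_trans (ler_norm d) hd.
  move=> [x' d] /= [hx' hd] y hy.
  have h1 : `|psi x - psi x'| < e / 2.
    apply: Hr; rewrite /ball_ /=.
    move: hx'; rewrite /ball /= => hx'.
    by apply: lt_trans hx' _; rewrite ltr_pdivrMr // ltr_pMr // ltr1n.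
  have h2 : `|psi x - psi y| < e / 2.
    apply: Hr; rewrite /ball_ /=.
    move: hx'; rewrite /ball /= => hx'.
    have := ler_distD x' x y.
    move=> H; apply: (le_lt_trans H); lra.
  have : `|psi x' - psi y| <= `|psi x - psi x'| + `|psi x - psi y|.
    by rewrite (distrC (psi x)); exact: ler_distD.
  move=> H; apply: (le_lt_trans H); lra.
near (0:R)^'+ => dl.
exists dl; first by near: dl; exact: nbhs_right_gt.
move=> x y xy.
pose k := Num.floor x.
rewrite -(per_int ppsi x (- k)) -(per_int ppsi y (- k)).
have hx : [set` `[(0:R), 1]] (x + (- k)%:~R).
  rewrite /= in_itv /= mulrNz; have := floor_itv x; rewrite -/k intrD => /andP[a b].
  apply/andP; split; lra.
have Hd : [set` `[(0:R), 1]] `<=` P dl by near: dl; exact: HP.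
apply: Hd hx _ _.
by have -> : x + (- k)%:~R - (y + (- k)%:~R) = x - y by ring.
Unshelve. all: by end_near.
Qed.

End Basics.

Section Integ.
Variable R : realType.
Implicit Types x y z a b : R.
Notation mu := (@lebesgue_measure R).

Definition Vint (k : R -> R) a x : R := (\int[mu]_(t in `[a, x]) k t)%R.

Lemma ltrDl_subproof x : x < x + 1. Proof. by rewrite ltrDl. Qed.

Lemma FTC1R (k : R -> R) a x : continuous k -> a < x -> is_derive x (1:R) (Vint k a) (k x).
Proof.
move=> ck ax.
have ik : mu.-integrable `[a, x + 1] (EFin \o k).
  apply: continuous_compact_integrable; first exact: segment_compact.
  exact: continuous_subspaceT.
have [h1 h2] := @continuous_FTC1_closed R k a x (x + 1) (ltrDl_subproof x) ik ax (@ck x).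
by apply: DeriveDef => //; rewrite -derive1E.
Qed.

Lemma FTC2R (k V : R -> R) a b : a < b -> continuous k ->
  (forall x, a <= x <= b -> is_derive x (1:R) V (k x)) ->
  (\int[mu]_(x in `[a, b]) (k x)%:E = (V b - V a)%:E)%E.
Proof.
move=> ab ck dV.
have cV x : a <= x <= b -> {for x, continuous V}.
  move=> /dV hd; apply: differentiable_continuous; apply/derivable1_diffP.
  by case: hd.
apply: continuous_FTC2 => //.
- exact: continuous_subspaceT.
- split.
  + move=> x; rewrite in_itv /= => /andP[h1 h2].
    have [] // := dV x; apply/andP; split; exact: ltW.
  + apply: cvg_at_right_filter; apply: cV; rewrite lexx; exact: ltW.
  + apply: cvg_at_left_filter; apply: cV; rewrite lexx andbT; exact: ltW.
- move=> x; rewrite in_itv /= => /andP[h1 h2].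
  rewrite derive1E; apply: derive_val; apply: dV; apply/andP; split; exact: ltW.
Qed.


Lemma near_inv (dl : R) : 0 < dl ->
  \forall N \near \oo, (0 < N)%N /\ (N%:R : R)^-1 < dl.
Proof.
move=> dl0; near=> N; split.
  by near: N; apply: nbhs_infty_gt.
have hN : ((Num.truncn (dl^-1)).+1 <= N)%N by near: N; exact: nbhs_infty_ge.
have h1 : dl^-1 < N%:R.
  apply: (lt_le_trans (truncnS_gt _)); by rewrite ler_nat.
have N0 : (0:R) < N%:R by apply: le_lt_trans h1; rewrite invr_ge0 ltW.
move: h1; rewrite -[dl^-1]mulr1 -[N%:R^-1]mulr1 !ltr_pdivrMl // mulrC.
Unshelve. all: by end_near.
Qed.

Lemma Vcont (k : R -> R) a x : continuous k -> a < x -> {for x, continuous (Vint k a)}.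
Proof.
move=> ck ax; apply: differentiable_continuous; apply/derivable1_diffP.
by case: (FTC1R ck ax).
Qed.

Lemma riemann (psi : R -> R) : continuous psi -> periodic1 psi ->
  (fun N : nat => (N%:R)^-1 * \sum_(i < N) psi (i%:R / N%:R)) @ \oo -->
  Vint psi (-1) 1 - Vint psi (-1) 0.
Proof.
move=> cp pp; apply/cvgrPdist_le => e e0.
have [dl dl0 hdl] := unif_cont cp pp e0.
set V := Vint psi (-1).
have := near_inv dl0; apply: filterS => N [N0 hN].
set h := (N%:R : R)^-1.
have hNh : h < dl := hN.
have NR0 : (0:R) < N%:R by rewrite ltr0n.
have h0 : 0 < h by rewrite invr_gt0.
have tel : V 1 - V 0 = \sum_(i < N) (V (i.+1%:R / N%:R) - V (i%:R / N%:R)).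
  rewrite -(big_mkord xpredT (fun i => V (i.+1%:R / N%:R) - V (i%:R / N%:R))).
  rewrite (telescope_sumr (fun i => V (i%:R / N%:R))) // divff ?mul0r //.
  exact: lt0r_neq0.
have term (i : nat) : `|(V (i.+1%:R / N%:R) - V (i%:R / N%:R)) - h * psi (i%:R / N%:R)| <= e * h.
  set a := i%:R / N%:R; set b := i.+1%:R / N%:R.
  have a0 : 0 <= a by rewrite /a divr_ge0.
  have bE : b = a + h by rewrite /b /a /h -natr1 mulrDl mul1r.
  have ab : a <= b by rewrite bE lerDl ltW.
  have dV : forall x, x \in `]a, b[ -> is_derive x (1:R) V (psi x).
    move=> x; rewrite in_itv /= => /andP[h1 _]; apply: FTC1R => //; lra.
  have cV : {within `[a, b], continuous V}.
    apply: continuous_in_subspaceT => x; rewrite inE /= in_itv /= => /andP[h1 _].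
    apply: Vcont => //; lra.
  have [c c1 ->] := MVT_segment ab dV cV.
  move: c1; rewrite in_itv /= => /andP[c1 c2].
  have -> : b - a = h by rewrite bE; ring.
  have : `|psi c - psi a| < e.
    rewrite distrC; apply: hdl; rewrite ler0_norm; [lra|].
    lra.
  move=> H; rewrite (mulrC h) -mulrBl normrM (gtr0_norm h0) ler_pM2r //; exact: ltW.
rewrite tel mulr_sumr -sumrB.
apply: le_trans (ler_norm_sum _ _ _) _.
apply: (@le_trans _ _ (\sum_(i < N) (e * h))).
  by apply: ler_sum => i _; exact: term i.
rewrite sumr_const card_ord -mulr_natr -mulrA mulVf ?mulr1 //.
exact: lt0r_neq0.
Qed.

End Integ.

Section Map.
Variable R : realType.
Variable F : R -> R.
Variable dn : nat.
Hypothesis hlift : forall x, F (x + 1) = F x + dn%:R.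
Hypothesis hder : forall x : R, derivable F x 1.
Hypothesis hcont : continuous (derive1 F).
Hypothesis hgt : forall x, 1 < derive1 F x.
Notation F' := (derive1 F).
Implicit Types x y z w : R.

Lemma lift_int (g : R -> R) (c : R) : (forall x, g (x + 1) = g x + c) ->
  forall x (k : int), g (x + k%:~R) = g x + k%:~R * c.
Proof.
move=> hg x k.
pose phi := fun x => g x - x * c.
have pp : periodic1 phi by move=> t; rewrite /phi hg; ring.
have := per_int pp x k; rewrite /phi => H.
have -> : g (x + k%:~R) = (g (x + k%:~R) - (x + k%:~R) * c) + (x + k%:~R) * c by ring.
rewrite H; ring.
Qed.

Lemma F_int x (k : int) : F (x + k%:~R) = F x + k%:~R * dn%:R.
Proof. exact: lift_int. Qed.

Lemma F_cont : continuous F.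
Proof. move=> x; apply: differentiable_continuous; apply/derivable1_diffP; exact: hder. Qed.

Lemma F_isd (x : R) : is_derive x (1:R) F (F' x).
Proof. rewrite derive1E; exact: derivableP. Qed.

Lemma F'_per : periodic1 F'.
Proof.
move=> x; rewrite /derive1.
suff -> : (fun h : R => h^-1 *: (F (h + (x + 1)) - F (x + 1))) =
  (fun h => h^-1 *: (F (h + x) - F x)) by [].
apply: funext => h; by rewrite addrA !hlift; congr (_ *: _); ring.
Qed.

Lemma F_mono x y : x < y -> y - x < F y - F x.
Proof.
move=> xy.
have [c _ ->] := MVT xy (fun t _ => F_isd t) (continuous_subspaceT F_cont).
have := hgt c; have : 0 < y - x by rewrite subr_gt0.
move=> h1 h2; rewrite -{1}(mul1r (y - x)) ltr_pM2r //.
Qed.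

Lemma F_monoW x y : x <= y -> y - x <= F y - F x.
Proof.
rewrite le_eqVlt => /orP[/eqP->|/F_mono/ltW //]; by rewrite !subrr.
Qed.

Lemma F_inj : injective F.
Proof.
move=> x y Fxy; apply/eqP; case: (ltgtP x y) => // h.
  by have := F_mono h; rewrite Fxy subrr subr_lt0 ltNge (ltW h).
by have := F_mono h; rewrite Fxy subrr subr_lt0 ltNge (ltW h).
Qed.

Lemma dn_gt0 : (0 < dn)%N.
Proof.
have := @F_mono 0 1 ltr01.
have -> : F 1 = F 0 + dn%:R by rewrite -hlift add0r.
rewrite addrAC subrr add0r subr0 => h.
have : (1 < dn)%N by rewrite -(ltr_nat R).
exact: ltnW.
Qed.

Lemma F_surj z : exists x, F x = z.
Proof.
pose b := `|z - F 0|; pose a := - b.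
have b0 : 0 <= b := normr_ge0 _.
have ab : a <= b by rewrite /a; lra.
have hb : z <= F b.
  have := @F_monoW 0 b (normr_ge0 _); have := ler_norm (z - F 0); rewrite -/b.
  move=> h1 h2; lra.
have ha : F a <= z.
  have := @F_monoW a 0; rewrite /a oppr_le0 normr_ge0 => /(_ isT).
  have := ler_norm (F 0 - z); rewrite distrC -/b.
  move=> h1 h2; lra.
have hz : Num.min (F a) (F b) <= z <= Num.max (F a) (F b) by rewrite ge_min le_max ha hb orbT.
have [c _ Fc] := IVT ab (continuous_subspaceT F_cont) hz; by exists c.
Qed.

Definition G (z : R) : R := proj1_sig (cid (F_surj z)).

Lemma FG z : F (G z) = z.
Proof. rewrite /G; by case: cid. Qed.

Lemma GF x : G (F x) = x.
Proof. by apply: F_inj; rewrite FG. Qed.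

Lemma G_cont : continuous G.
Proof.
move=> z.
have h1 : {near G z, cancel F G} by near=> t; exact: GF.
have h2 : {near G z, continuous F} by near=> t; exact: F_cont.
have := near_can_continuous h1 h2; rewrite FG => /nbhs_singleton; exact.
Unshelve. all: by end_near. Qed.

Lemma G_int z (k : int) : G (z + k%:~R * dn%:R) = G z + k%:~R.
Proof. by apply: F_inj; rewrite F_int !FG. Qed.

Lemma G_mono z w : z < w -> G z < G w.
Proof.
move=> zw; rewrite ltNge; apply/negP => h.
have := F_monoW h; rewrite !FG => h2; lra.
Qed.


Definition frac (z : R) : R := z - (Num.floor z)%:~R.

Lemma frac_ge0 z : 0 <= frac z.
Proof. by rewrite /frac subr_ge0 floor_le. Qed.

Lemma frac_lt1 z : frac z < 1.
Proof. by have := floorD1_gt z; rewrite /frac intrD => h; lra. Qed.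

Lemma frac_int z : frac z = z + (- Num.floor z)%:~R.
Proof. by rewrite /frac mulrNz. Qed.

Lemma frac_ne (y : R) (i j : nat) : (i < j)%N -> (j < dn)%N ->
  frac (G (y + i%:R)) <> frac (G (y + j%:R)).
Proof.
move=> ij jd; rewrite /frac => E.
have h1 : G (y + i%:R) < G (y + j%:R) by apply: G_mono; rewrite ltrD2l ltr_nat.
have h2 : G (y + j%:R) < G (y + i%:R) + 1.
  rewrite -[1]/(1%:~R) -G_int; apply: G_mono.
  rewrite mul1r -addrA ltrD2l -natrD ltr_nat.
  exact: (leq_trans jd (leq_addl _ _)).
set m := Num.floor (G (y + j%:R)) - Num.floor (G (y + i%:R)).
have hm : G (y + j%:R) - G (y + i%:R) = m%:~R.
  by rewrite /m intrD mulrNz; lra.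
have m0 : (0:R) < m%:~R by lra.
have m1 : m%:~R < (1:R) by lra.
rewrite ltr0z in m0; rewrite ltrz1 in m1; lia.
Qed.

Lemma preim_shift y : Defs.preim F (y + 1) = Defs.preim F y.
Proof.
rewrite eqEsubset; split => x [hx [k hk]]; split => //.
  by exists (k + 1); rewrite hk intrD; ring.
by exists (k - 1); rewrite hk intrD; rewrite mulrNz; ring.
Qed.

Lemma transfer_per g : periodic1 (transfer F g).
Proof. by move=> y; rewrite /transfer preim_shift. Qed.

Definition u (g : R -> R) (z : R) : R := g (G z) / F' (G z).

Lemma preimE y : Defs.preim F y = (fun j : nat => frac (G (y + j%:R))) @` `I_dn.
Proof.
rewrite eqEsubset; split => x.
  move=> [/andP[x0 x1] [k hk]].
  have dz : (dn%:Z != 0) by rewrite eqz_nat -lt0n dn_gt0.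
  pose r := (k %% dn%:Z)%Z; pose q := (k %/ dn%:Z)%Z.
  have r0 : 0 <= r by exact: modz_ge0.
  have rd : r < dn%:Z by apply: ltz_pmod; rewrite ltz_nat dn_gt0.
  have kE : k = q * dn%:Z + r by exact: divz_eq.
  exists `|r|%N; first by rewrite /= -ltz_nat gez0_abs.
  have xE : x = G (y + k%:~R) by rewrite -hk GF.
  have rE : (`|r|%N%:R : R) = r%:~R by rewrite -[in RHS](gez0_abs r0).
  have : G (y + k%:~R) = G (y + r%:~R) + q%:~R.
    rewrite -G_int; congr G; rewrite kE intrD intrM; ring.
  rewrite -xE rE => xe.
  have -> : G (y + r%:~R) = x + (- q)%:~R by rewrite xe mulrNz; ring.
  rewrite frac_int; suff -> : Num.floor (x + (- q)%:~R) = - q by rewrite opprK mulrNz; ring.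
  apply: floor_def; rewrite intrD; apply/andP; split; lra.
move=> [j /= jd <-]; split.
  by rewrite frac_ge0 frac_lt1.
exists (j%:Z - Num.floor (G (y + j%:R)) * dn%:Z).
by rewrite frac_int F_int FG !intrD !mulrNz !intrM !pmulrn; ring.
Qed.

Lemma transferE g : periodic1 g -> forall y,
  transfer F g y = \sum_(j < dn) u g (y + j%:R).
Proof.
move=> pg y; rewrite /transfer preimE fsbig_image; last first.
  move=> i j; rewrite /= !inE /= => id jd E.
  case: (ltngtP i j) => // h; first by have := @frac_ne y _ _ h jd.
  by have := @frac_ne y _ _ h id; rewrite E.
rewrite (@fsbig_ord _ _ _ dn (fun j : nat => u g (y + j%:R))); apply: eq_fsbigr => j _.
by rewrite /u frac_int per_int // (per_int F'_per).
Qed.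

Lemma cont_sum n (f : 'I_n -> R -> R) : (forall i, continuous (f i)) ->
  continuous (fun y => \sum_(i < n) f i y).
Proof.
elim: n f => [|n IH] f hf.
  under eq_fun do rewrite big_ord0; exact: cst_continuous.
under eq_fun do rewrite big_ord_recr /=.
move=> y; apply: cvgD; last exact: hf.
exact: (IH (fun i => f (widen_ord (leqnSn n) i))).
Qed.

Lemma u_cont g : continuous g -> continuous (u g).
Proof.
move=> cg z.
have h1 : {for z, continuous (g \o G)} := continuous_comp (@G_cont z) (@cg (G z)).
have h2 : {for z, continuous (F' \o G)} := continuous_comp (@G_cont z) (@hcont (G z)).
have h3 : (F' \o G) z != 0 by apply: lt0r_neq0; apply: lt_trans (hgt _).
exact: (continuousM h1 (continuousV h3 h2)).
Qed.

Lemma transfer_cont g : continuous g -> periodic1 g -> continuous (transfer F g).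
Proof.
move=> cg pg; have E : transfer F g = (fun y => \sum_(j < dn) u g (y + j%:R)).
  by apply: funext => y; exact: transferE.
rewrite E; apply: (@cont_sum dn (fun (j : 'I_dn) (y:R) => u g (y + j%:R))) => j y.
have h : {for y, continuous (fun t : R => t + j%:R)}.
  by apply: cvgD; [exact: cvg_id | exact: cvg_cst].
exact: (continuous_comp h (@u_cont g cg (y + j%:R))).
Qed.


Notation mu := (@lebesgue_measure R).

Lemma deriv0_cst (W : R -> R) a : (forall x, a < x -> is_derive x (1:R) W 0) ->
  forall p q, a < p -> a < q -> W p = W q.
Proof.
move=> dW.
suff H : forall p q, a < p -> p <= q -> W p = W q.
  move=> p q ap aq; case: (leP p q) => pq; first exact: H.
  by apply/esym/H => //; exact: ltW.
move=> p q ap pq.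
have d1 : forall x, x \in `]p, q[ -> is_derive x (1:R) W 0.
  move=> x; rewrite in_itv /= => /andP[h1 _]; apply: dW; lra.
have c1 : {within `[p, q], continuous W}.
  apply: continuous_in_subspaceT => x; rewrite inE /= in_itv /= => /andP[h1 _].
  have [] : is_derive x (1:R) W 0 by apply: dW; lra.
  by move=> /derivable1_diffP /differentiable_continuous.
have [c _] := MVT_segment pq d1 c1.
by rewrite mul0r => /eqP; rewrite subr_eq0 => /eqP.
Qed.

Lemma shift_derive (V : R -> R) (c x d : R) : is_derive (x + c) (1:R) V d ->
  is_derive x (1:R) (fun y => V (y + c)) d.
Proof.
move=> hV.
have h2 : is_derive x (1:R) (fun y : R => y + c) (1 + 0).
  exact: is_deriveD.
have := is_derive1_comp (f:=V) (g:=fun y => y + c) hV h2.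
by rewrite addr0 mulr1.
Qed.

Lemma duality (h g : R -> R) : continuous h -> periodic1 h -> continuous g -> periodic1 g ->
  (\int[mu]_(x in `[0%R, 1%R]) (h x * transfer F g x)%:E =
   \int[mu]_(x in `[0%R, 1%R]) (h (F x) * g x)%:E)%E.
Proof.
move=> ch ph cg pg.
pose k := fun z => h z * u g z.
have ck : continuous k by move=> z; apply: continuousM; [exact: ch | exact: u_cont].
have kper : forall z, k (z + dn%:R) = k z.
  move=> z; rewrite /k /u per_nat //.
  have -> : z + dn%:R = z + 1%:~R * dn%:R by rewrite mul1r.
  by rewrite G_int pg F'_per.
pose a := Num.min (F 0) 0 - 1.
have aF : a < F 0 by rewrite /a; have := ge_min (F 0) (F 0) 0; rewrite lexx /= => H; lra.
have a0 : a < 0 by rewrite /a; have := ge_min 0 (F 0) 0; rewrite lexx orbT => H; lra.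
pose V := Vint k a.
have dV : forall x, a < x -> is_derive x (1:R) V (k x) by move=> x ax; exact: FTC1R.
have F1 : F 1 = F 0 + dn%:R by rewrite -hlift add0r.
have RHS : (\int[mu]_(x in `[0%R, 1%R]) (h (F x) * g x)%:E = (V (F 0 + dn%:R) - V (F 0))%:E)%E.
  have sub := @integration_by_substitution_increasing R F k 0 1 ler01.
  rewrite F1 in sub.
  transitivity (\int[mu]_(x in `[(F 0)%R, (F 0 + dn%:R)%R]) (k x)%:E)%E; last first.
    apply: FTC2R.
    - have := F_mono ltr01; rewrite F1; lra.
    - exact: ck.
    - move=> x /andP[x1 _]; apply: dV; lra.
  rewrite sub.
  - apply: eq_integral => x _; congr EFin.
    transitivity (h (F x) * (g (G (F x)) / F' (G (F x))) * F' x); last by [].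
    rewrite GF.
    by field; apply: lt0r_neq0; apply: lt_trans (hgt _).
  - move=> x y _ _ xy; have := F_mono xy; lra.
  - by move=> x _; exact: hcont.
  - exact: (cvgP _ (cvg_at_right_filter (@hcont 0))).
  - exact: (cvgP _ (cvg_at_left_filter (@hcont 1))).
  - split; first by move=> x _; exact: hder.
      exact: (cvg_at_right_filter (@F_cont 0)).
    exact: (cvg_at_left_filter (@F_cont 1)).
  - exact: continuous_subspaceT.
pose U := fun y => \sum_(j < dn) V (y + j%:R).
have LHS : (\int[mu]_(x in `[0%R, 1%R]) (h x * transfer F g x)%:E = (U 1 - U 0)%:E)%E.
  apply: FTC2R => //.
  - move=> x; apply: continuousM; [exact: ch | exact: transfer_cont].
  - move=> x /andP[x0 _].
    have -> : U = \sum_(j < dn) (fun y => V (y + j%:R)) by rewrite fct_sumE.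
    rewrite transferE // mulr_sumr.
    apply: is_derive_sum => j; apply: shift_derive.
    have := dV (x + j%:R) _; rewrite /k per_nat //; apply; have := ler0n R j; lra.
rewrite LHS RHS; congr EFin.
have -> : U 1 - U 0 = V dn%:R - V 0.
  rewrite /U -sumrB.
  rewrite -(big_mkord xpredT (fun j => V (1 + j%:R) - V (0 + j%:R))).
  under eq_bigr do rewrite add0r (addrC 1) natr1.
  by rewrite (telescope_sumr (fun j => V j%:R)).
pose W := fun z => V (z + dn%:R) - V z.
have dW : forall x, a < x -> is_derive x (1:R) W 0.
  move=> x ax; rewrite -(subrr (k x)).
  apply: is_deriveB; last exact: dV.
  rewrite -{1}(kper x); apply: shift_derive; apply: dV.
  have := ler0n R dn; lra.
have := deriv0_cst dW aF a0; rewrite /W add0r => ->.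
done.
Qed.


Lemma iterL_cp m : continuous (iter m (transfer F) (fun _ => 1)) /\
  periodic1 (iter m (transfer F) (fun _ => 1)).
Proof.
elim: m => [|m [c p]] /=; first by split => //; exact: cst_continuous.
split; [exact: transfer_cont | exact: transfer_per].
Qed.

Variable P : nat -> R -> nat.
Hypothesis hP : closest_proj P.

Lemma cdist_proj (N : nat) z : (0 < N)%N -> cdist z ((P N z)%:R / N%:R) < (N%:R)^-1.
Proof.
move=> N0; have [_ hmin] := hP z N0.
have NR0 : (0:R) < N%:R by rewrite ltr0n.
pose a := Num.floor (z * N%:R).
have Nz : (N%:Z != 0) by rewrite eqz_nat -lt0n.
pose r := (a %% N%:Z)%Z; pose q := (a %/ N%:Z)%Z.
have r0 : 0 <= r by exact: modz_ge0.
have rN : r < N%:Z by apply: ltz_pmod; rewrite ltz_nat.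
have aE : a = q * N%:Z + r by exact: divz_eq.
have jN : (`|r|%N < N)%N by rewrite -ltz_nat gez0_abs.
apply: (le_lt_trans (hmin _ jN)).
apply: (le_lt_trans (cdist_le _ _ q)).
have rE : (`|r|%N%:R : R) = r%:~R by rewrite -[in RHS](gez0_abs r0).
rewrite rE.
have hz : z - r%:~R / N%:R - q%:~R = (z * N%:R - a%:~R) / N%:R.
  have aR : (a%:~R : R) = q%:~R * N%:R + r%:~R.
    by rewrite [in LHS]aE intrD intrM -pmulrn.
  rewrite aR; field; exact: lt0r_neq0.
rewrite hz; have := floor_itv (z * N%:R); rewrite -/a intrD => /andP[h1 h2].
rewrite ger0_norm; last by rewrite divr_ge0 // subr_ge0.
rewrite ltr_pdivrMr // mulVf ?lt0r_neq0 //; lra.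
Qed.

Lemma proj_close (psi : R -> R) : continuous psi -> periodic1 psi ->
  forall e, 0 < e -> \forall N \near \oo, (0 < N)%N /\
    forall z, `|psi z - psi ((P N z)%:R / N%:R)| < e.
Proof.
move=> cp pp e e0; have [dl dl0 hdl] := unif_cont cp pp e0.
have := near_inv dl0; apply: filterS => N [N0 hN]; split => // z.
have [k hk] := cdist_ex z ((P N z)%:R / N%:R).
have := cdist_proj z N0 => hc.
rewrite -(per_int pp z (- k)); apply: hdl.
rewrite mulrNz; apply: (le_lt_trans _ (lt_trans hc hN)); apply: le_trans hk.
by rewrite -addrA (addrC (- _)) addrA.
Qed.

Definition avg (N : nat) (psi : R -> R) (m : nat) : R :=
  (N%:R)^-1 * \sum_(i < N) psi ((iter m (discr F P N) i)%:R / N%:R).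

Lemma claim m : forall psi, continuous psi -> periodic1 psi ->
  exists l : R,
    (\int[mu]_(x in `[0%R, 1%R]) (psi x * iter m (transfer F) (fun _ => 1) x)%:E = l%:E)%E /\
    (fun N => avg N psi m) @ \oo --> l.
Proof.
elim: m => [|m IH] psi cp pp.
  exists (Vint psi (-1) 1 - Vint psi (-1) 0); split.
    rewrite /=; under eq_integral do rewrite mulr1.
    apply: FTC2R; [exact: ltr01 | exact: cp | move=> x /andP[x0 _]; apply: FTC1R => //; lra].
  exact: riemann.
have cpF : continuous (psi \o F).
  by move=> x; apply: continuous_comp; [exact: F_cont | exact: cp].
have ppF : periodic1 (psi \o F) by move=> x; rewrite /= hlift per_nat.
have [l [hl hcv]] := IH _ cpF ppF.
exists l; split.
  have [c p] := iterL_cp m.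
  by rewrite /= duality // -hl.
apply/cvgrPdist_le => e e0.
have e20 : 0 < e / 2 by rewrite divr_gt0.
move/cvgrPdist_le: hcv => /(_ _ e20) hcv.
have := proj_close cp pp e20.
move=> hpc; near=> N.
have [N0 hz] : (0 < N)%N /\ forall z, `|psi z - psi ((P N z)%:R / N%:R)| < e / 2.
  by near: N.
have h1 : `|l - avg N (psi \o F) m| <= e / 2 by near: N.
have NR0 : (0:R) < N%:R by rewrite ltr0n.
have h2 : `|avg N (psi \o F) m - avg N psi m.+1| <= e / 2.
  have Ni0 : 0 <= (N%:R : R)^-1 by rewrite invr_ge0 ltW.
  rewrite /avg -mulrBr -sumrB normrM (ger0_norm Ni0).
  apply: (@le_trans _ _ ((N%:R : R)^-1 * \sum_(i < N) (e / 2))).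
    rewrite ler_pM2l ?invr_gt0 //.
    apply: le_trans (ler_norm_sum _ _ _) _; apply: ler_sum => i _.
    rewrite iterS /discr /=; exact: ltW.
  rewrite sumr_const card_ord -[(e / 2) *+ N]mulr_natr (mulrC (e / 2)) mulrA mulVf ?mul1r //.
  exact: lt0r_neq0.
have := ler_distD (avg N (psi \o F) m) l (avg N psi m.+1).
move=> H; apply: le_trans H _; lra.
Unshelve. all: by end_near.
Qed.

End Map.

Unset Implicit Arguments.

Theorem lemma6p5 (R : realType) (F : R -> R) (P : nat -> R -> nat) (m : nat) :
  C1_expanding F -> closest_proj P ->
  forall phi : R -> R, continuous phi -> periodic1 phi ->
  (fun N : nat =>
     ((N%:R)^-1 * \sum_(i < N) phi ((iter m (discr F P N) i)%:R / N%:R))%:E)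
    @ \oo -->
  (\int[lebesgue_measure]_(x in `[0%R, 1%R]) (phi x * iter m (transfer F) (fun _ => 1) x)%:E)%E.
Proof.
move=> [[d hd] hder hcont hgt] hP phi cphi pphi.
have d0 : 0 < d.
  have := F_mono hder hgt (@ltr01 R).
  have -> : F 1 = F 0 + d%:~R by rewrite -hd add0r.
  rewrite addrAC subrr add0r subr0 => h.
  by rewrite -(ltr0z R); apply: lt_trans h.
case: d hd d0 => [dn|n] hd d0; last by [].
have hlift : forall x, F (x + 1) = F x + dn%:R by move=> x; rewrite hd.
have [l [hl hcv]] := claim hlift hder hcont hgt hP m cphi pphi.
rewrite hl; apply: cvg_EFin; first by near=> N.
exact: hcv.
Unshelve. all: by end_near.
Qed.
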